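(* Let $\mathcal{R}$ be a finite set of $K$ records, $n\in\mathbb{N}$, $\theta\in(0,1)$, $p$ a pmf on $\mathcal{R}$, and $\mathcal{F}:\mathcal{H}^n\times\mathcal{H}^n\to[0,\infty)$ a distortion measure. Then there exists a database sanitizing mechanism $(\mathbb{W}(\cdot|\underline a):\underline a\in\mathcal{R}^n)$ such that (i) $\mathbb{W}(\cdot|\underline a)=\mathbb{W}(\cdot|\underline{\tilde a})$ whenever $\mathtt{h}(\underline a)=\mathtt{h}(\underline{\tilde a})$; (ii) $\mathbb{W}(\underline b|\underline a)/\mathbb{W}(\underline b|\underline{\hat a})\in[\theta,1/\theta]$ for every pair of neighboring databases $\underline a,\underline{\hat a}$ and every database $\underline b$; and (iii) $D^n(\mathbb{W})\le D^n(\mathbb{U})$ for every $\theta$-DP database sanitizing mechanism $\mathbb{U}$.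
   Context: A database is $\underline r=(r_1,\dots,r_n)\in\mathcal{R}^n$; its histogram $\mathtt{h}(\underline r)\in\mathcal{H}^n:=\{(h_1,\dots,h_K)\in\mathbb{Z}^K:h_k\ge0,\sum_kh_k=n\}$ has $k$-th entry the number of $i$ with $r_i=a_k$, where $\mathcal{R}=\{a_1,\dots,a_K\}$. Databases are neighboring if they differ in exactly one entry. A database sanitizing mechanism assigns to each $\underline r\in\mathcal{R}^n$ a pmf $\mathbb{W}(\cdot|\underline r)$ on $\mathcal{R}^n$; it is $\theta$-DP if $\theta\mathbb{W}(\underline s|\underline r)\le\mathbb{W}(\underline s|\underline{\hat r})\le\theta^{-1}\mathbb{W}(\underline s|\underline r)$ for all neighboring $\underline r,\underline{\hat r}$ and all $\underline s$. Its expected distortion is $D^n(\mathbb{W})=\sum_{\underline r,\underline s\in\mathcal{R}^n}\prod_{i=1}^n p(r_i)\,\mathbb{W}(\underline s|\underline r)\,\mathcal{F}(\mathtt{h}(\underline r),\mathtt{h}(\underline s))$. *)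

(* Defs.v *)
From HB Require Import structures.
From mathcomp Require Import all_boot all_order all_algebra.
From mathcomp Require Import reals.
Set Implicit Arguments. Unset Strict Implicit. Unset Printing Implicit Defensive.
Import Order.TTheory GRing.Theory Num.Theory.
Local Open Scope ring_scope.

Definition database (Rec : finType) (n : nat) := {ffun 'I_n -> Rec}.

Definition hist (Rec : finType) (n : nat) (r : database Rec n) : {ffun Rec -> nat} :=
  [ffun a => #|[set i | r i == a]|].

Definition is_hist (Rec : finType) (n : nat) (h : {ffun Rec -> nat}) : Prop :=
  (\sum_(a : Rec) h a)%N = n.

Definition neighbors (Rec : finType) (n : nat) (r r' : database Rec n) : Prop :=
  #|[set i | r i != r' i]| = 1%N.

(* A database sanitizing mechanism: W r s = W(s | r), a pmf in s for each r. *)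
Definition mechanism (T : realType) (Rec : finType) (n : nat)
  (W : database Rec n -> database Rec n -> T) : Prop :=
  forall r, (forall s, 0 <= W r s) /\ \sum_(s : database Rec n) W r s = 1.

Definition is_DP (T : realType) (Rec : finType) (n : nat) (theta : T)
  (W : database Rec n -> database Rec n -> T) : Prop :=
  forall r rh s, neighbors r rh ->
    theta * W r s <= W rh s /\ W rh s <= theta^-1 * W r s.

Definition distortion (T : realType) (Rec : finType) (n : nat) (p : Rec -> T)
  (F : {ffun Rec -> nat} -> {ffun Rec -> nat} -> T)
  (W : database Rec n -> database Rec n -> T) : T :=
  \sum_(r : database Rec n) \sum_(s : database Rec n)
     (\prod_(i < n) p (r i)) * W r s * F (hist r) (hist s).

(* Main.v *)
Require Import Defs.
From HB Require Import structures.
From mathcomp Require Import all_boot all_order all_algebra all_fingroup.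
From mathcomp Require Import reals.
From mathcomp Require Import all_classical all_reals all_analysis.
From Stdlib Require Import FunctionalExtensionality.
Import Order.TTheory GRing.Theory Num.Theory.
Set Implicit Arguments. Unset Strict Implicit.
Import numFieldTopology.Exports numFieldNormedType.Exports.

Definition prd (Rec : finType) n (r : database Rec n) (p : 'S_n) : database Rec n :=
  [ffun i => r (p i)].

Lemma count_hist (Rec : finType) n (a : database Rec n) x :
  count_mem x [tuple a i | i < n] = hist a x.
Proof.
rewrite /hist ffunE /=. rewrite count_map cardE size_filter enumT.
apply: eq_count => i; by rewrite /= inE.
Qed.

Lemma hist_perm (Rec : finType) n (a a' : database Rec n) :
  hist a = hist a' -> exists s : 'S_n, a' = prd a s.
Proof.
move=> h.
have : perm_eq [tuple a' i | i < n] [tuple a i | i < n].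
  rewrite /perm_eq; apply/allP => x _; by rewrite /= !count_hist h.
move/tuple_permP => [s hs]; exists s; apply/ffunP => i.
have hs' : [tuple a' i | i < n] = [tuple tnth [tuple a i0 | i0 < n] (s i) | i < n].
  exact: val_inj.
have := congr1 (fun t => tnth t i) hs'.
by rewrite !tnth_mktuple ffunE.
Qed.

Section Sym.
Local Open Scope ring_scope.
Variables (T : realType) (Rec : finType) (n : nat).
Notation D := (database Rec n).

Lemma prd_inj (p : 'S_n) : injective (fun r : D => prd r p).
Proof.
move=> r r' /ffunP e; apply/ffunP => i.
have := e (p^-1 i)%g; by rewrite !ffunE permKV.
Qed.

Lemma hist_prd (r : D) p : hist (prd r p) = hist r.
Proof.
apply/ffunP => a; rewrite !ffunE.
rewrite -[RHS](card_preimset _ (@perm_inj _ p)); apply: eq_card => i; by rewrite !inE ffunE.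
Qed.

Lemma prod_prd (f : Rec -> T) (r : D) p :
  \prod_(i < n) f (prd r p i) = \prod_(i < n) f (r i).
Proof.
under eq_bigr do rewrite ffunE.
by rewrite [RHS](reindex_inj (@perm_inj _ p)).
Qed.

Lemma neighbors_prd (r rh : D) p : neighbors r rh -> neighbors (prd r p) (prd rh p).
Proof.
rewrite /neighbors => <-.
rewrite -[RHS](card_preimset _ (@perm_inj _ p)); apply: eq_card => i; by rewrite !inE !ffunE.
Qed.

Definition kS : T := (#|{: 'S_n}|%:R)^-1.
Definition sym (W : D -> D -> T) : D -> D -> T :=
  fun r s => kS * \sum_(p : 'S_n) W (prd r p) s.

Lemma kS_ge0 : 0 <= kS.
Proof. by rewrite /kS invr_ge0 ler0n. Qed.

Lemma kS_card : kS * #|{: 'S_n}|%:R = 1.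
Proof.
rewrite /kS mulVf // pnatr_eq0 -lt0n; apply/card_gt0P; by exists 1%g.
Qed.

Lemma sym_mech W : mechanism W -> mechanism (sym W).
Proof.
move=> hW r; split.
  move=> s; apply: mulr_ge0; first exact: kS_ge0.
  by apply: sumr_ge0 => p _; case: (hW (prd r p)).
rewrite /sym -mulr_sumr exchange_big /=.
under eq_bigr do rewrite (proj2 (hW _)).
by rewrite sumr_const -mulr_natr mul1r kS_card.
Qed.

Lemma sym_DP theta W : 0 <= theta -> is_DP theta W -> is_DP theta (sym W).
Proof.
move=> t0 hW r rh s hn; rewrite /sym; split.
  rewrite mulrCA; apply: ler_wpM2l; first exact: kS_ge0.
  rewrite mulr_sumr; apply: ler_sum => p _.
  exact: (proj1 (hW _ _ s (neighbors_prd p hn))).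
rewrite mulrCA; apply: ler_wpM2l; first exact: kS_ge0.
rewrite mulr_sumr; apply: ler_sum => p _.
exact: (proj2 (hW _ _ s (neighbors_prd p hn))).
Qed.

Lemma sym_hist W a a' : hist a = hist a' -> sym W a = sym W a'.
Proof.
move=> /hist_perm [s ->]; apply: functional_extensionality => b; rewrite /sym; congr (_ * _).
rewrite (reindex_inj (@mulIg _ s)) /=; apply: eq_bigr => p _.
congr (W _ b); apply/ffunP => i; by rewrite !ffunE permM.
Qed.

Lemma sym_dist (p : Rec -> T) F W : distortion p F (sym W) = distortion p F W.
Proof.
rewrite /distortion /sym.
transitivity (kS * \sum_(q : 'S_n) \sum_(r : D) \sum_(s : D)
   (\prod_(i < n) p (r i)) * W (prd r q) s * F (hist r) (hist s)).
  rewrite [RHS]mulr_sumr.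
  under [RHS]eq_bigr do rewrite mulr_sumr.
  rewrite [RHS]exchange_big /=; apply: eq_bigr => r _.
  under [RHS]eq_bigr do rewrite mulr_sumr.
  rewrite [RHS]exchange_big /=; apply: eq_bigr => s _.
  rewrite mulr_sumr mulr_sumr mulr_suml; apply: eq_bigr => q _.
  by rewrite !mulrA [_ * kS]mulrC.
transitivity (kS * \sum_(q : 'S_n) \sum_(r : D) \sum_(s : D)
   (\prod_(i < n) p (r i)) * W r s * F (hist r) (hist s)).
  congr (_ * _); apply: eq_bigr => q _.
  rewrite [RHS](reindex_inj (@prd_inj q)) /=; apply: eq_bigr => r _.
  by apply: eq_bigr => s _; rewrite prod_prd hist_prd.
by rewrite sumr_const -mulr_natr mulrCA kS_card mulr1.
Qed.
End Sym.

Section Topo.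
Local Open Scope classical_set_scope.
Local Open Scope ring_scope.
Variables (T : realType) (Rec : finType) (n : nat).
Notation D := (database Rec n).
Notation N := #|{: (D * D)%type}|.

Definition Wof (v : 'rV[T]_N) : D -> D -> T := fun r s => v ord0 (enum_rank (r, s)).

Lemma Wof_cont r s : continuous (fun v : 'rV[T]_N => Wof v r s).
Proof. exact: coord_continuous. Qed.

Lemma cont_sum (I : Type) (l : seq I) (g : I -> 'rV[T]_N -> T) :
  (forall i, continuous (g i)) -> continuous (fun v => \sum_(i <- l) g i v).
Proof.
move=> hg; elim: l => [|i l IH].
  under eq_fun do rewrite big_nil; exact: cst_continuous.
under eq_fun do rewrite big_cons.
move=> x; apply: (@continuousD _ _ _ (g i) (fun v => \sum_(j <- l) g j v)).
  exact: hg.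
exact: IH.
Qed.

Lemma cont_lin (a b : T) (g : 'rV[T]_N -> T) : continuous g ->
  continuous (fun v => a * g v * b).
Proof.
move=> hg x.
apply: (@continuousM _ _ (fun v => a * g v) (fun _ => b)); last exact: cst_continuous.
apply: (@continuousM _ _ (fun _ => a) g); [exact: cst_continuous | exact: hg].
Qed.

Lemma closed_lef (f g : 'rV[T]_N -> T) : continuous f -> continuous g ->
  closed [set v | f v <= g v].
Proof.
move=> hf hg.
have -> : [set v | f v <= g v] = (fun v => g v - f v) @^-1` [set x | 0 <= x].
  by apply/seteqP; split => v /=; rewrite subr_ge0.
apply: preimage_closed; last exact: closed_ge.
move=> v _; apply: (@continuousB _ _ _ g f); [exact: hg | exact: hf].
Qed.

Lemma closed_eqf (f : 'rV[T]_N -> T) c : continuous f -> closed [set v | f v = c].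
Proof.
move=> hf.
have -> : [set v | f v = c] = f @^-1` [set x | x = c] by [].
apply: preimage_closed; last exact: closed_eq.
by move=> v _; exact: hf.
Qed.

End Topo.

Local Open Scope classical_set_scope.
Local Open Scope ring_scope.

Theorem lemma1 (T : realType) (Rec : finType) (n : nat) (theta : T)
  (p : Rec -> T) (F : {ffun Rec -> nat} -> {ffun Rec -> nat} -> T) :
  0 < theta -> theta < 1 ->
  (forall a, 0 <= p a) -> \sum_(a : Rec) p a = 1 ->
  (forall h h', is_hist n h -> is_hist n h' -> 0 <= F h h') ->
  exists W : database Rec n -> database Rec n -> T,
    [/\ mechanism W,
        (forall a a', hist a = hist a' -> W a = W a'),
        is_DP theta W &
        (forall U : database Rec n -> database Rec n -> T,
           mechanism U -> is_DP theta U ->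
           distortion p F W <= distortion p F U)].
Proof.
move=> th0 th1 _ _ _.
pose A := [set v : 'rV[T]_#|{: (database Rec n * database Rec n)%type}| |
            mechanism (Wof v) /\ is_DP theta (Wof v)].
have Acl : closed A.
  have -> : A = (\bigcap_(rs in [set: (database Rec n * database Rec n)%type])
                   [set v | 0 <= Wof v rs.1 rs.2]) `&`
                (\bigcap_(r in [set: database Rec n]) [set v | \sum_s Wof v r s = 1]) `&`
                (\bigcap_(t in [set t : (database Rec n * database Rec n * database Rec n)%type
                                  | neighbors t.1.1 t.1.2])
                   ([set v | theta * Wof v t.1.1 t.2 <= Wof v t.1.2 t.2] `&`
                    [set v | Wof v t.1.2 t.2 <= theta^-1 * Wof v t.1.1 t.2])).
    apply/seteqP; split => v /=.
      move=> [hm hd]; split; [split|].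
      - by rewrite /bigcap /= => rs _; case: (hm rs.1).
      - by rewrite /bigcap /= => r _; case: (hm r).
      - by rewrite /bigcap /= => t hn; exact: hd.
    move=> [[h1 h2] h3]; split.
      by move=> r; split; [move=> s; exact: (h1 (r, s) I) | exact: (h2 r I)].
    by move=> r rh s hn; exact: (h3 ((r, rh), s) hn).
  apply: closedI; first apply: closedI.
  - apply: closed_bigI => rs _; apply: closed_lef; [exact: cst_continuous | exact: Wof_cont].
  - apply: closed_bigI => r _; apply: closed_eqf; apply: cont_sum => s; exact: Wof_cont.
  - apply: closed_bigI => t _; apply: closedI; apply: closed_lef.
    + move=> x; apply: (@continuousM _ _ (fun _ => theta)); [exact: cst_continuous | exact: Wof_cont].
    + exact: Wof_cont.
    + exact: Wof_cont.
    + move=> x; apply: (@continuousM _ _ (fun _ => theta^-1)); [exact: cst_continuous | exact: Wof_cont].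
have AB : A `<=` [set v | forall i, `[0, 1]%classic (v ord0 i)].
  move=> v [hm _] i /=.
  have -> : v ord0 i = Wof v (enum_val i).1 (enum_val i).2.
    by rewrite /Wof -surjective_pairing enum_valK.
  set r := (enum_val i).1; set s := (enum_val i).2.
  case: (hm r) => h0 h1.
  rewrite in_itv /= h0 /= -h1 (bigD1 s) //= lerDl.
  by apply: sumr_ge0 => x _.
have Acomp : compact A.
  apply: (subclosed_compact Acl _ AB).
  exact: (@rV_compact T _ (fun _ => `[0, 1]%classic) (fun _ => @segment_compact T 0 1)).
have A0 : A !=set0.
  pose c : T := (#|{: database Rec n}|%:R)^-1.
  have c0 : 0 <= c by rewrite invr_ge0 ler0n.
  exists (const_mx c); split.
    move=> r; split; first by move=> s; rewrite /Wof mxE.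
    rewrite /Wof; under eq_bigr do rewrite mxE.
    rewrite sumr_const -mulr_natr mulVf // pnatr_eq0 -lt0n; apply/card_gt0P; by exists r.
  move=> r rh s _; rewrite /Wof !mxE; split.
    by rewrite ler_piMl // ltW.
  by rewrite ler_peMl // invf_ge1 // ltW.
pose f := fun v : 'rV[T]_#|{: (database Rec n * database Rec n)%type}| => distortion p F (Wof v).
have fc : continuous f.
  rewrite /f /distortion; apply: cont_sum => r; apply: cont_sum => s.
  exact: (@cont_lin T Rec n _ _ _ (@Wof_cont T Rec n r s)).
have [c cA cmin] := compact_EVT_min A0 Acomp (continuous_subspaceT fc).
have [cm cd] : A c by rewrite -in_setE.
exists (sym (Wof c)); split.
- exact: sym_mech.
- by move=> a a'; exact: sym_hist.
- by apply: sym_DP => //; exact: ltW.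
move=> U Um Ud.
pose u : 'rV[T]_#|{: (database Rec n * database Rec n)%type}| := \row_i U (@enum_val _ (pred_of_simpl predT) i).1 (@enum_val _ (pred_of_simpl predT) i).2.
have uU : Wof u = U.
  apply: functional_extensionality => r; apply: functional_extensionality => s.
  by rewrite /Wof mxE enum_rankK.
rewrite sym_dist.
have := cmin u; rewrite /f uU; apply; rewrite in_setE /A /= uU; by split.
Qed.
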